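(* Let $V$ be a real Hilbert space, $\mathcal D$ a dictionary, $V_n\subset V$ any subspace of dimension $n$ with orthonormal basis $(\phi_1,\dots,\phi_n)$, and $\kappa\in(0,1)$. If $(W_m)_{m\ge0}$ is generated by the collective OMP algorithm with parameter $\kappa$, then $\lim_{m\to\infty}r_m=0$.
   Context: A dictionary is a set $\mathcal D\subset V$ of elements with $\|\omega\|=1$ for all $\omega\in\mathcal D$ whose finite linear combinations are dense in $V$. Collective OMP: $W_0=\{0\}$; for $k\ge1$, choose $\omega_k\in\mathcal D$ with $$\sum_{i=1}^n|\langle\phi_i-P_{W_{k-1}}\phi_i,\omega_k\rangle|^2\ge\kappa^2\sup_{\omega\in\mathcal D}\sum_{i=1}^n|\langle\phi_i-P_{W_{k-1}}\phi_i,\omega\rangle|^2,$$ and set $W_k=\operatorname{span}\{\omega_1,\dots,\omega_k\}$ ($P_X$ is the orthogonal projection onto $X$). The residual is $r_m=\sum_{i=1}^n\|\phi_i-P_{W_m}\phi_i\|^2$. *)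

(* Defs.v *)
From HB Require Import structures.
From mathcomp Require Import all_boot all_order all_algebra.
From mathcomp Require Import all_classical all_reals all_analysis.
Set Implicit Arguments. Unset Strict Implicit. Unset Printing Implicit Defensive.
Import Order.TTheory GRing.Theory Num.Theory.
Import numFieldNormedType.Exports.
Local Open Scope classical_set_scope.
Local Open Scope ring_scope.

(* A real inner product compatible with the norm of V (V complete => Hilbert). *)
Definition is_inner_product (R : realType) (V : normedModType R)
  (ip : V -> V -> R) : Prop :=
  [/\ forall x y, ip x y = ip y x,
      forall a x y z, ip (a *: x + y) z = a * ip x z + ip y z &
      forall x, ip x x = `|x| ^+ 2].

Definition lin_span (R : realType) (V : normedModType R) (D : set V) : set V :=
  [set v | exists (k : nat) (c : nat -> R) (d : nat -> V),
     (forall j, (j < k)%N -> D (d j)) /\ v = \sum_(j < k) c j *: d j].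

Definition dictionary (R : realType) (V : normedModType R) (D : set V) : Prop :=
  (forall w, D w -> `|w| = 1) /\ closure (lin_span D) = setT.

(* W_m = span {w 0, ..., w (m-1)}  (w j stands for omega_(j+1)) *)
Definition spanW (R : realType) (V : normedModType R) (w : nat -> V) (m : nat)
  : set V :=
  [set v | exists c : nat -> R, v = \sum_(j < m) c j *: w j].

Definition is_orth_proj (R : realType) (V : normedModType R)
  (ip : V -> V -> R) (S : set V) (x p : V) : Prop :=
  S p /\ forall s, S s -> ip (x - p) s = 0.

(* Main.v *)
Require Import Defs.
From HB Require Import structures.
From mathcomp Require Import all_boot all_order all_algebra.
From mathcomp Require Import all_classical all_reals all_analysis.
From mathcomp Require Import lra.
Import Order.TTheory GRing.Theory Num.Theory.
Import numFieldNormedType.Exports.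
Local Open Scope classical_set_scope.
Local Open Scope ring_scope.


Section IP.
Set Implicit Arguments. Unset Strict Implicit.
Variables (R : realType) (V : normedModType R) (ip : V -> V -> R).
Hypothesis Hip : is_inner_product ip.

Lemma ipC x y : ip x y = ip y x. Proof. by case: Hip. Qed.
Lemma ipDZl a x y z : ip (a *: x + y) z = a * ip x z + ip y z.
Proof. by case: Hip. Qed.
Lemma ipxx x : ip x x = `|x| ^+ 2. Proof. by case: Hip. Qed.
Lemma ip0l z : ip 0 z = 0.
Proof. have := ipDZl 1 0 0 z; rewrite scale1r addr0 mul1r => h; lra. Qed.
Lemma ipDl x y z : ip (x + y) z = ip x z + ip y z.
Proof. by have := ipDZl 1 x y z; rewrite scale1r mul1r. Qed.
Lemma ipZl a x z : ip (a *: x) z = a * ip x z.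
Proof. by have := ipDZl a x 0 z; rewrite !addr0 ip0l addr0. Qed.
Lemma ipNl x z : ip (- x) z = - ip x z.
Proof. by rewrite -scaleN1r ipZl mulN1r. Qed.
Lemma ipBl x y z : ip (x - y) z = ip x z - ip y z.
Proof. by rewrite ipDl ipNl. Qed.
Lemma ipDr x y z : ip z (x + y) = ip z x + ip z y.
Proof. by rewrite ipC ipDl !(ipC z). Qed.
Lemma ipZr a x z : ip z (a *: x) = a * ip z x.
Proof. by rewrite ipC ipZl (ipC z). Qed.
Lemma ipBr x y z : ip z (x - y) = ip z x - ip z y.
Proof. by rewrite ipC ipBl !(ipC z). Qed.
Lemma ip0r z : ip z 0 = 0. Proof. by rewrite ipC ip0l. Qed.
Lemma ipge0 x : 0 <= ip x x. Proof. by rewrite ipxx sqr_ge0. Qed.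

Lemma ip_sumr x k (f : 'I_k -> V) : ip x (\sum_(j < k) f j) = \sum_(j < k) ip x (f j).
Proof.
elim: k f => [|k IH] f; first by rewrite !big_ord0 ip0r.
by rewrite !big_ord_recr /= ipDr IH.
Qed.

Lemma norm_sub_proj x om : ip om om = 1 ->
  ip (x - ip x om *: om) (x - ip x om *: om) = ip x x - (ip x om) ^+ 2.
Proof.
move=> h; rewrite !ipBl !ipBr !ipZl !ipZr h (ipC om x).
set a := ip x om; set b := ip x x; rewrite expr2; lra.
Qed.

Lemma ip_sq_le x om : ip om om = 1 -> (ip x om) ^+ 2 <= ip x x.
Proof. move=> h; have := ipge0 (x - ip x om *: om); rewrite norm_sub_proj //; lra. Qed.

Lemma ip_small x y d : 0 < d -> ip x x <= 1 -> ip y y <= d ^+ 2 -> `|ip x y| <= d.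
Proof.
move=> d0 hx hy.
have h1 := ipge0 (d *: x - y); have h2 := ipge0 (d *: x + y).
move: h1 h2 hx hy; rewrite !ipBl !ipDl !ipBr !ipDr !ipZl !ipZr (ipC y x).
set a := ip x y; set b := ip x x; set c := ip y y => h1 h2 hx hy.
have hb : d ^+ 2 * b <= d ^+ 2 by rewrite ler_piMr // sqr_ge0.
rewrite expr2 in hy hb.
rewrite ler_norml; apply/andP; split.
- rewrite -(ler_pM2l d0) mulrN; lra.
- rewrite -(ler_pM2l d0); lra.
Qed.

Lemma pyth u v : ip u v = 0 -> ip (u + v) (u + v) = ip u u + ip v v.
Proof. by move=> h; rewrite ipDl !ipDr (ipC v u) h addr0 add0r. Qed.

Lemma pyth_le u v : ip u v = 0 -> ip u u <= ip (u + v) (u + v).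
Proof. by move=> h; rewrite pyth // lerDl ipge0. Qed.

End IP.

Section SP.
Set Implicit Arguments. Unset Strict Implicit.


Lemma spanW_mono (R : realType) (V : normedModType R) (w : nat -> V) m s :
  spanW w m s -> spanW w m.+1 s.
Proof.
case=> c ->; exists (fun j => if j == m then 0 else c j).
rewrite big_ord_recr /= eqxx scale0r addr0; apply: eq_bigr => j _.
by rewrite (ltn_eqF (ltn_ord j)).
Qed.

Lemma spanW_last (R : realType) (V : normedModType R) (w : nat -> V) m :
  spanW w m.+1 (w m).
Proof.
exists (fun j => (j == m)%:R).
rewrite big_ord_recr /= eqxx scale1r big1 ?add0r // => j _.
by rewrite (ltn_eqF (ltn_ord j)) scale0r.
Qed.

End SP.

Lemma cvg_sum0 (R : realType) k (f : 'I_k -> nat -> R) :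
  (forall j, f j @ \oo --> 0) -> (fun m => \sum_(j < k) f j m) @ \oo --> 0.
Proof.
elim: k f => [|k IH] f hf.
  by under eq_fun do rewrite big_ord0; exact: cvg_cst.
under eq_fun do rewrite big_ord_recr /=.
have := cvgD (IH (fun j => f (widen_ord (leqnSn k) j)) (fun j => hf _)) (hf ord_max).
by rewrite addr0; apply.
Qed.

Theorem mainTheorem10 (R : realType) (V : completeNormedModType R)
  (ip : V -> V -> R) (D : set V) (n : nat) (phi : 'I_n -> V) (kappa : R)
  (w : nat -> V) (P : nat -> 'I_n -> V) :
  is_inner_product ip ->
  dictionary D ->
  (forall i j, ip (phi i) (phi j) = (i == j)%:R) ->
  0 < kappa < 1 ->
  (forall m i, is_orth_proj ip (spanW w m) (phi i) (P m i)) ->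
  (forall k, D (w k) /\
     \sum_(i < n) (ip (phi i - P k i) (w k)) ^+ 2 >=
       kappa ^+ 2 * sup [set \sum_(i < n) (ip (phi i - P k i) om) ^+ 2
                         | om in D]) ->
  (fun m => \sum_(i < n) `|phi i - P m i| ^+ 2) @ \oo --> (0 : R).
Proof.
move=> Hip [Dnorm Ddense] Hortho /andP[k0 k1] HP Hw.
pose r m i := phi i - P m i.
pose e m := \sum_(i < n) ip (r m i) (r m i).
pose S m := \sum_(i < n) (ip (r m i) (w m)) ^+ 2.
have Dip om : D om -> ip om om = 1 by move=> /Dnorm h; rewrite (ipxx Hip) h expr1n.
have phi1 i : ip (phi i) (phi i) = 1 by rewrite Hortho eqxx.
have orth m i s : spanW w m s -> ip (r m i) s = 0 by have [_ h] := HP m i; exact: h.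
have Pin m i : spanW w m (P m i) by have [h _] := HP m i.
have rphi m i : ip (r m i) (phi i) = ip (r m i) (r m i).
  by rewrite [in RHS]/r (ipBr Hip) (orth m i _ (Pin m i)) subr0.
have rle1 m i : ip (r m i) (r m i) <= 1.
  have e1 : phi i = r m i + P m i by rewrite /r subrK.
  by have := pyth_le Hip (orth m i _ (Pin m i)); rewrite -e1 phi1.
have dec m : e m.+1 + S m <= e m.
  rewrite -big_split; apply: ler_sum => i _ /=.
  pose y := P m i + ip (r m i) (w m) *: w m.
  have hy : phi i - y = r m i - ip (r m i) (w m) *: w m by rewrite /y /r opprD addrA.
  have hs : ip (r m.+1 i) (P m.+1 i - y) = 0.
    rewrite /y (ipBr Hip) (ipDr Hip) (ipZr Hip) (orth m.+1 i _ (Pin m.+1 i)).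
    rewrite (orth m.+1 i _ (spanW_mono (Pin m i))) (orth m.+1 i _ (spanW_last _ _)).
    by rewrite mulr0 addr0 subr0.
  have hd : phi i - y = r m.+1 i + (P m.+1 i - y) by rewrite /r addrA subrK.
  have key : ip (phi i - y) (phi i - y) =
     ip (r m.+1 i) (r m.+1 i) + ip (P m.+1 i - y) (P m.+1 i - y).
    by rewrite hd (pyth Hip hs).
  have key2 : ip (phi i - y) (phi i - y) = ip (r m i) (r m i) - ip (r m i) (w m) ^+ 2.
    by rewrite hy (norm_sub_proj Hip) // Dip //; case: (Hw m).
  have := ipge0 Hip (P m.+1 i - y); lra.
have S0 m : 0 <= S m by apply: sumr_ge0 => i _; exact: sqr_ge0.
have e0 m : 0 <= e m by apply: sumr_ge0 => i _; exact: ipge0.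
have cvge : cvgn e.
  apply: nonincreasing_is_cvgn; last by exists 0 => _ [m _ <-].
  by apply/nonincreasing_seqP => m; have := dec m; have := S0 m; lra.
have Scvg : S @ \oo --> 0.
  case/cvg_ex: cvge => l el.
  have el' : (fun m => e m.+1) @ \oo --> l by rewrite (cvg_shiftS e).
  have h : (fun m => e m - e m.+1) @ \oo --> 0.
    by rewrite -(subrr l); apply: cvgB.
  apply: (@squeeze_cvgr _ _ _ _ (fun=> 0) (fun m => e m - e m.+1)) => //.
    apply: nearW => m /=; rewrite S0 /=; have := dec m; lra.
  exact: cvg_cst.
have ipw i om : D om -> (fun m => ip (r m i) om) @ \oo --> 0.
  move=> Dom; apply/cvgr0Pnorm_le => eps eps0.
  have hpos : 0 < kappa ^+ 2 * eps ^+ 2 by rewrite mulr_gt0 // exprn_gt0.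
  move/cvgr0Pnorm_le: Scvg => /(_ _ hpos); apply: filterS => m hm.
  have hSm : S m <= kappa ^+ 2 * eps ^+ 2 by rewrite (le_trans (ler_norm _)).
  have [_ hsup] := Hw m.
  pose E := [set \sum_(i < n) (ip (phi i - P m i) om) ^+ 2 | om in D].
  have ubE : has_ubound E.
    exists (e m); move=> x [z Ho <-]; apply: ler_sum => j _.
    exact: (ip_sq_le Hip _ (Dip _ Ho)).
  have hT : \sum_(j < n) (ip (r m j) om) ^+ 2 <= sup E.
    by apply: ub_le_sup => //; exists om.
  have ht : (ip (r m i) om) ^+ 2 <= \sum_(j < n) (ip (r m j) om) ^+ 2.
    rewrite (bigD1 i) //= lerDl; apply: sumr_ge0 => j _; exact: sqr_ge0.
  have hs : sup E <= eps ^+ 2.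
    rewrite -(ler_pM2l (exprn_gt0 2 k0)); apply: le_trans hSm.
    exact: hsup.
  have hx : (ip (r m i) om) ^+ 2 <= eps ^+ 2 by apply: le_trans ht (le_trans hT hs).
  move: hx; set x := ip (r m i) om => hx.
  rewrite !expr2 in hx; rewrite ler_norml; apply/andP; split; nra.
have spanc i v : lin_span D v -> (fun m => ip (r m i) v) @ \oo --> 0.
  move=> [k [c [d [hd ->]]]].
  have -> : (fun m => ip (r m i) (\sum_(j < k) c j *: d j)) =
            (fun m => \sum_(j < k) c j * ip (r m i) (d j)).
    by apply: funext => m; rewrite (ip_sumr Hip); apply: eq_bigr => j _; rewrite (ipZr Hip).
  apply: (@cvg_sum0 _ _ (fun (j : 'I_k) m => c j * ip (r m i) (d j))) => j.
  rewrite -(mulr0 (c j)); apply: cvgMl_tmp; apply: ipw; exact: hd.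
have -> : (fun m => \sum_(i < n) `|phi i - P m i| ^+ 2) = e.
  by apply: funext => m; rewrite /e; apply: eq_bigr => i _; rewrite (ipxx Hip).
apply/cvgr0Pnorm_le => eps eps0.
pose d := eps / (2 * (n%:R + 1)).
have hN : 0 < 2 * (n%:R + 1) :> R by have := ler0n R n; lra.
have d0 : 0 < d by rewrite divr_gt0.
have hd : d * (2 * (n%:R + 1)) = eps by rewrite /d mulfVK // gt_eqF.
have hv i : exists v, lin_span D v /\ ip (phi i - v) (phi i - v) <= d ^+ 2.
  have : closure (lin_span D) (phi i) by rewrite Ddense.
  move=> /(_ _ (nbhsx_ballx (phi i) d d0)) [v [hv hb]].
  exists v; split => //.
  rewrite (ipxx Hip); move: hb; rewrite -ball_normE /ball_ => hb.
  move: hb => /= /ltW hb; rewrite expr2; exact: ler_pM.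
have [v hvv] := boolp.choice hv.
have cv := @cvg_sum0 R n (fun i m => ip (r m i) (v i)) (fun i => spanc i (v i) (hvv i).1).
have eps2 : 0 < eps / 2 by rewrite divr_gt0.
move/cvgr0Pnorm_le : cv => /(_ _ eps2).
apply: filterS => m hm.
rewrite ger0_norm ?e0 //.
have -> : e m = \sum_(i < n) ip (r m i) (v i) + \sum_(i < n) ip (r m i) (phi i - v i).
  rewrite -big_split; apply: eq_bigr => i _ /=.
  by rewrite -rphi (ipBr Hip) addrC subrK.
have h2 : \sum_(i < n) ip (r m i) (phi i - v i) <= n%:R * d.
  apply: (@le_trans _ _ (\sum_(i < n) d)).
    apply: ler_sum => i _.
    exact: le_trans (ler_norm _) (ip_small Hip d0 (rle1 m i) (hvv i).2).
  by rewrite sumr_const card_ord mulr_natl.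
have := ler_norm (\sum_(i < n) ip (r m i) (v i)).
have := ler0n R n.
move: hm h2 hd; set N := n%:R; set A := \sum_(i < n) ip (r m i) (v i).
set B := \sum_(i < n) _; move=> hm h2 hd h3 h4; nra.
Qed.
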